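(* Let $f=[f_k]:\mathbb{R}^n\to\mathbb{R}^n$ and $g_p=[g_{p,k}]:\mathbb{R}^n\to\mathbb{R}^n$, $p\in\{1,\dots,d\}$, be functions, let $\alpha^1,\dots,\alpha^d\in\mathbb{N}^m$, and let $(x^i,\dot x^i,u^i)\in\mathbb{R}^n\times\mathbb{R}^n\times\mathbb{R}^m$ be a data point satisfying $\dot x^i=f(x^i)+\sum_{p=1}^d g_p(x^i)\,u^i[\alpha^p]$. Let $\mathcal{F}^i=[\mathcal{F}^i_k]\in\mathbb{IR}^n$ with $f(x^i)\in\mathcal{F}^i$ and $\mathcal{G}^i=[\mathcal{G}^i_{p,k}]\in\mathbb{IR}^{d\times n}$ with $g_{p,k}(x^i)\in\mathcal{G}^i_{p,k}$ for all $p,k$. For each $k\in\{1,\dots,n\}$ define, using interval arithmetic, $$C_{\mathcal{F}^i_k}=\mathcal{F}^i_k\cap\Big(\dot x^i_k-\sum_{p=1}^d\mathcal{G}^i_{p,k}\,u^i[\alpha^p]\Big),\qquad \mathcal{S}_{0,k}=\big(\dot x^i_k-C_{\mathcal{F}^i_k}\big)\cap\Big(\sum_{p=1}^d\mathcal{G}^i_{p,k}\,u^i[\alpha^p]\Big),$$ and recursively for $p=1,\dots,d$: $$C_{\mathcal{G}^i_{p,k}}=\begin{cases}\Big(\big(\mathcal{S}_{p-1,k}-\sum_{l=p+1}^d\mathcal{G}^i_{l,k}u^i[\alpha^l]\big)\cap\mathcal{G}^i_{p,k}u^i[\alpha^p]\Big)\dfrac{1}{u^i[\alpha^p]}, & \text{if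 } u^i[\alpha^p]\neq0,\\[1ex] \mathcal{G}^i_{p,k}, &\text{otherwise,}\end{cases}$$ $$\mathcal{S}_{p,k}=\big(\mathcal{S}_{p-1,k}-C_{\mathcal{G}^i_{p,k}}u^i[\alpha^p]\big)\cap\Big(\sum_{l=p+1}^d\mathcal{G}^i_{l,k}u^i[\alpha^l]\Big)$$ (an empty sum being $[0,0]$). Then $C_{\mathcal{F}^i}=[C_{\mathcal{F}^i_k}]$ and $C_{\mathcal{G}^i}=[C_{\mathcal{G}^i_{p,k}}]$ are the smallest intervals enclosing $f(x^i)$ and $g_p(x^i)$ given only the data $(x^i,\dot x^i,u^i)$, $\mathcal{F}^i$ and $\mathcal{G}^i$; that is, for every $k$ and $p$, $C_{\mathcal{F}^i_k}$ (resp. $C_{\mathcal{G}^i_{p,k}}$) is exactly the set of values of the $k$-th component of $F$ (resp. the $(p,k)$ entry of $G$) over all pairs $(F,G)\in\mathcal{F}^i\times\mathcal{G}^i$ satisfying $\dot x^i=F+\sum_{p=1}^d G_{p,\cdot}\,u^i[\alpha^p]$, where $G_{p,\cdot}\in\mathbb{R}^n$ is the $p$-th row of $G$.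
   Context: $\mathbb{IR}$ is the set of closed bounded real intervals; $\mathbb{IR}^n$, $\mathbb{IR}^{d\times n}$ are interval vectors/matrices, with intersection and membership componentwise. Operations between intervals and reals are standard interval arithmetic ($\mathcal{A}+\mathcal{B}=\{a+b\}$, $c\mathcal{A}=\{ca\}$, $\mathcal{A}-\mathcal{B}=\{a-b\}$ for $a\in\mathcal{A},b\in\mathcal{B}$), real numbers being identified with degenerate intervals. For $u\in\mathbb{R}^m$ and $\alpha\in\mathbb{N}^m$, $u[\alpha]=u_1^{\alpha_1}\cdots u_m^{\alpha_m}$. *)

(* Defs.v *)
From Stdlib Require Import Reals.
Open Scope R_scope.

(* Subsets of R; interval arithmetic is the set-wise (Minkowski) arithmetic
   of the paper: A+B = {a+b}, A-B = {a-b}, cA = {ca}, reals = degenerate intervals. *)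
Definition iset := R -> Prop.

Definition is_interval (A : iset) : Prop :=
  exists lo hi, lo <= hi /\ forall z, A z <-> (lo <= z /\ z <= hi).

Definition ipt (r : R) : iset := fun z => z = r.
Definition iadd (A B : iset) : iset := fun z => exists a b, A a /\ B b /\ z = a + b.
Definition isub (A B : iset) : iset := fun z => exists a b, A a /\ B b /\ z = a - b.
Definition iscal (c : R) (A : iset) : iset := fun z => exists a, A a /\ z = c * a.
Definition icap (A B : iset) : iset := fun z => A z /\ B z.

Fixpoint isum (l c : nat) (F : nat -> iset) : iset :=
  match c with
  | O => ipt 0
  | S c' => iadd (F l) (isum (S l) c' F)
  end.

Fixpoint rsum (l c : nat) (f : nat -> R) : R :=
  match c with
  | O => 0
  | S c' => f l + rsum (S l) c' f
  end.

(* u[a] = u_0^{a_0} * ... * u_{m-1}^{a_{m-1}} (coordinates indexed 0..m-1). *)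
Fixpoint mono (m : nat) (u : nat -> R) (a : nat -> nat) : R :=
  match m with
  | O => 1
  | S m' => mono m' u a * u m' ^ a m'
  end.

Section Contractor.
(* Data for a fixed component k: d, monomial exponents alpha p (p = 1..d),
   input u in R^m, xdot_k, the interval F_k and the intervals G_{p,k}. *)
Variables (d m : nat) (alpha : nat -> nat -> nat) (u : nat -> R)
          (xdk : R) (Fk : iset) (Gk : nat -> iset).

Definition wt (p : nat) : R := mono m u (alpha p).
Definition GU (l : nat) : iset := iscal (wt l) (Gk l).
(* sum_{l=p+1}^d G_{l,k} u[alpha^l] *)
Definition tailsum (p : nat) : iset := isum (S p) (d - p) GU.

Definition CF : iset := icap Fk (isub (ipt xdk) (tailsum 0)).

(* C_{G_{p,k}} computed from S_{p-1,k} *)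
Definition CGstep (p : nat) (Sprev : iset) : iset :=
  if Req_EM_T (wt p) 0 then Gk p
  else iscal (/ wt p) (icap (isub Sprev (tailsum p)) (GU p)).

Fixpoint Sset (p : nat) : iset :=
  match p with
  | O => icap (isub (ipt xdk) CF) (tailsum 0)
  | S p' => icap (isub (Sset p') (iscal (wt p) (CGstep p (Sset p')))) (tailsum p)
  end.

Definition CG (p : nat) : iset := CGstep p (Sset (p - 1)).
End Contractor.

(* Main.v *)
Require Import Defs.
From Stdlib Require Import Reals Lra Lia Arith.
Open Scope R_scope.

Lemma rsum_ext l c f g : (forall j, (l <= j < l + c)%nat -> f j = g j) ->
  rsum l c f = rsum l c g.
Proof.
  revert l; induction c as [|c IH]; intros l H; simpl; [reflexivity|].
  rewrite (H l) by lia. rewrite (IH (S l)) by (intros; apply H; lia). reflexivity.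
Qed.

Lemma rsum_app l a b f : rsum l (a + b) f = rsum l a f + rsum (l + a) b f.
Proof.
  revert l; induction a as [|a IH]; intros l; simpl.
  - rewrite Nat.add_0_r; ring.
  - rewrite IH. replace (S l + a)%nat with (l + S a)%nat by lia. ring.
Qed.

Lemma rsum_split d p f : (1 <= p <= d)%nat ->
  rsum 1 d f = rsum 1 (p - 1) f + (f p + rsum (S p) (d - p) f).
Proof.
  intros Hp. replace d with ((p - 1) + S (d - p))%nat at 1 by lia.
  rewrite rsum_app. replace (1 + (p - 1))%nat with p by lia. reflexivity.
Qed.

Lemma rsum_tail d p f : (1 <= p <= d)%nat ->
  rsum p (d - (p - 1)) f = f p + rsum (S p) (d - p) f.
Proof. intros Hp. replace (d - (p - 1))%nat with (S (d - p)) by lia. reflexivity. Qed.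

Lemma isum_spec (w : nat -> R) (Gk : nat -> iset) l c z :
  isum l c (fun j => iscal (w j) (Gk j)) z <->
  exists G : nat -> R, (forall j, (l <= j < l + c)%nat -> Gk j (G j)) /\
     z = rsum l c (fun j => G j * w j).
Proof.
  revert l z; induction c as [|c IH]; intros l z; simpl.
  - unfold ipt. split.
    + intros ->. exists (fun _ => 0). split; [intros; lia| reflexivity].
    + intros [G [_ ->]]. reflexivity.
  - split.
    + intros [a [b [[a' [Ha' ->]] [Hb ->]]]].
      apply IH in Hb. destruct Hb as [G [HG ->]].
      exists (fun j => if Nat.eqb j l then a' else G j). split.
      * intros j Hj. destruct (Nat.eqb_spec j l). subst; auto. apply HG; lia.
      * rewrite Nat.eqb_refl. rewrite (rsum_ext (S l) c (fun j => (if Nat.eqb j l then a' else G j) * w j) (fun j => G j * w j)).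
        ring. intros j Hj. destruct (Nat.eqb_spec j l); [lia|reflexivity].
    + intros [G [HG ->]]. exists (w l * G l), (rsum (S l) c (fun j => G j * w j)).
      split; [exists (G l); split; [apply HG; lia|reflexivity]|].
      split; [apply IH; exists G; split; [intros; apply HG; lia|reflexivity]|ring].
Qed.

Definition feas (d : nat) (w : nat -> R) (xdk : R) (Fk : iset) (Gk : nat -> iset)
  (F : R) (G : nat -> R) :=
  Fk F /\ (forall l, (1 <= l <= d)%nat -> Gk l (G l)) /\
  xdk = F + rsum 1 d (fun l => G l * w l).

Lemma tail_spec d m alpha u Gk p z :
  tailsum d m alpha u Gk p z <-> exists G : nat -> R,
    (forall j, (S p <= j < S p + (d - p))%nat -> Gk j (G j)) /\
    z = rsum (S p) (d - p) (fun j => G j * wt m alpha u j).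
Proof. unfold tailsum, GU. apply isum_spec. Qed.

Lemma CGstep_in d m alpha u Gk p S c :
  CGstep d m alpha u Gk p S c -> Gk p c.
Proof.
  unfold CGstep. destruct (Req_EM_T (wt m alpha u p) 0); auto.
  intros [z [[_ [a [Ha ->]]] ->]]. unfold GU in Ha.
  replace (/ wt m alpha u p * (wt m alpha u p * a)) with a by (field; auto); auto.
Qed.

Definition patch (p : nat) (G : nat -> R) (a : R) (G' : nat -> R) : nat -> R :=
  fun j => if Nat.ltb j p then G j else if Nat.eqb j p then a else G' j.

Lemma patch_feas d w xdk Fk Gk F G a G' p :
  (1 <= p <= d)%nat ->
  feas d w xdk Fk Gk F G -> Gk p a ->
  (forall j, (S p <= j < S p + (d - p))%nat -> Gk j (G' j)) ->
  rsum p (d - (p - 1)) (fun j => G j * w j) = a * w p + rsum (S p) (d - p) (fun j => G' j * w j) ->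
  feas d w xdk Fk Gk F (patch p G a G') /\ patch p G a G' p = a /\
  rsum (S p) (d - p) (fun j => patch p G a G' j * w j) = rsum (S p) (d - p) (fun j => G' j * w j).
Proof.
  intros Hp [HF [HG Hx]] Ha HG' Hs.
  assert (Et : rsum (S p) (d - p) (fun j => patch p G a G' j * w j) = rsum (S p) (d - p) (fun j => G' j * w j)).
  { apply rsum_ext. intros j Hj. unfold patch.
    destruct (Nat.ltb_spec j p); [lia|]. destruct (Nat.eqb_spec j p); [lia|reflexivity]. }
  assert (Ep : patch p G a G' p = a).
  { unfold patch. destruct (Nat.ltb_spec p p); [lia|]. rewrite Nat.eqb_refl. reflexivity. }
  split; [|split; auto].
  split; [auto|split].
  - intros l Hl. unfold patch. destruct (Nat.ltb_spec l p); [apply HG; lia|].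
    destruct (Nat.eqb_spec l p); [subst; auto|apply HG'; lia].
  - rewrite Hx. rewrite (rsum_split d p (fun l => G l * w l)) by auto.
    rewrite (rsum_split d p (fun l => patch p G a G' l * w l)) by auto.
    rewrite Et, Ep. rewrite (rsum_tail d p (fun l => G l * w l)) in Hs by auto.
    cbv beta in Hs.
    rewrite (rsum_ext 1 (p - 1) (fun l => patch p G a G' l * w l) (fun l => G l * w l)).
    lra. intros j Hj. unfold patch. destruct (Nat.ltb_spec j p); [reflexivity|lia].
Qed.

Lemma CF_spec d m alpha u xdk Fk Gk y :
  CF d m alpha u xdk Fk Gk y <-> exists G, feas d (wt m alpha u) xdk Fk Gk y G.
Proof.
  unfold CF, icap, isub, ipt. split.
  - intros [HF [a [b [-> [Hb ->]]]]]. apply tail_spec in Hb.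
    destruct Hb as [G [HG Hb]]. rewrite Nat.sub_0_r in Hb.
    exists G. split; [auto|split].
    + intros l Hl. apply HG. lia.
    + rewrite <- Hb. ring.
  - intros [G [HF [HG Hx]]]. split; auto.
    exists xdk, (rsum 1 d (fun l => G l * wt m alpha u l)). split; [reflexivity|split].
    + apply tail_spec. exists G. rewrite Nat.sub_0_r. split; [intros; apply HG; lia|reflexivity].
    + lra.
Qed.

Lemma Sset_spec d m alpha u xdk Fk Gk q y : (q <= d)%nat ->
  Sset d m alpha u xdk Fk Gk q y <-> exists F G, feas d (wt m alpha u) xdk Fk Gk F G /\
     y = rsum (S q) (d - q) (fun l => G l * wt m alpha u l).
Proof.
  revert y; induction q as [|q IH]; intros y Hq.
  - simpl. unfold icap, isub, ipt. split.
    + intros [[a [c [-> [Hc ->]]]] Hy]. destruct Hc as [HFc _].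
      apply tail_spec in Hy. destruct Hy as [G [HG Hy]]. rewrite Nat.sub_0_r in Hy.
      exists c, G. rewrite Nat.sub_0_r. split; [|auto].
      split; [auto|split]; [intros l Hl; apply HG; lia| rewrite <- Hy; ring].
    + intros [F [G [Hf Hy]]]. rewrite Nat.sub_0_r in Hy. split.
      * exists xdk, F. split; [reflexivity|split].
        -- apply CF_spec. exists G. auto.
        -- destruct Hf as [_ [_ Hx]]. subst y. lra.
      * apply tail_spec. exists G. rewrite Nat.sub_0_r.
        destruct Hf as [_ [HG _]]. split; [intros; apply HG; lia|auto].
  - change (Sset d m alpha u xdk Fk Gk (S q)) with
      (icap (isub (Sset d m alpha u xdk Fk Gk q)
        (iscal (wt m alpha u (S q)) (CGstep d m alpha u Gk (S q) (Sset d m alpha u xdk Fk Gk q))))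
        (tailsum d m alpha u Gk (S q))).
    unfold icap, isub, iscal. split.
    + intros [[s [z [Hs [[c [Hc ->]] ->]]]] Hy].
      apply IH in Hs; [|lia]. destruct Hs as [F [G [Hf ->]]].
      apply tail_spec in Hy. destruct Hy as [G' [HG' Hy]].
      apply CGstep_in in Hc.
      destruct (patch_feas d (wt m alpha u) xdk Fk Gk F G c G' (S q)) as [Hf2 [_ Ht]]; auto; [lia| |].
      * replace (S q - 1)%nat with q by lia. rewrite <- Hy. ring.
      * exists F, (patch (S q) G c G'). split; auto. rewrite Ht. auto.
    + intros [F [G [Hf Hy]]]. split.
      * exists (rsum (S q) (d - q) (fun l => G l * wt m alpha u l)),
           (wt m alpha u (S q) * G (S q)). split; [apply IH; [lia|exists F, G; auto]|split].
        -- exists (G (S q)). split; [|reflexivity].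
           unfold CGstep. destruct (Req_EM_T (wt m alpha u (S q)) 0).
           ++ destruct Hf as [_ [HG _]]. apply HG. lia.
           ++ exists (wt m alpha u (S q) * G (S q)). split; [|field; auto].
              split; [|exists (G (S q)); split; [destruct Hf as [_ [HG _]]; apply HG; lia|reflexivity]].
              exists (rsum (S q) (d - q) (fun l => G l * wt m alpha u l)), y.
              split; [apply IH; [lia|exists F, G; auto]|split].
              ** apply tail_spec. exists G. destruct Hf as [_ [HG _]].
                 split; [intros; apply HG; lia|auto].
              ** rewrite Hy. replace (d - q)%nat with (S (d - S q)) by lia. simpl. ring.
        -- rewrite Hy. replace (d - q)%nat with (S (d - S q)) by lia. simpl. ring.
      * apply tail_spec. exists G. destruct Hf as [_ [HG _]].
        split; [intros; apply HG; lia|auto].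
Qed.

Lemma CG_spec d m alpha u xdk Fk Gk p y F0 G0 : (1 <= p <= d)%nat ->
  feas d (wt m alpha u) xdk Fk Gk F0 G0 ->
  CG d m alpha u xdk Fk Gk p y <-> exists F G, feas d (wt m alpha u) xdk Fk Gk F G /\ G p = y.
Proof.
  intros Hp Hf0. unfold CG. split.
  - intros Hc. pose proof (CGstep_in _ _ _ _ _ _ _ _ Hc) as Hy.
    unfold CGstep in Hc. destruct (Req_EM_T (wt m alpha u p) 0) as [E|E].
    + exists F0, (fun j => if Nat.eqb j p then y else G0 j).
      rewrite Nat.eqb_refl. split; [|reflexivity].
      destruct Hf0 as [HF [HG Hx]]. split; [auto|split].
      * intros l Hl. destruct (Nat.eqb_spec l p); [subst; auto|auto].
      * rewrite Hx. f_equal. apply rsum_ext. intros j Hj.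
        destruct (Nat.eqb_spec j p); [subst; rewrite E; ring|reflexivity].
    + destruct Hc as [z [[[s [t [Hs [Ht ->]]]] [a [Ha Hz]]] ->]].
      apply Sset_spec in Hs; [|lia]. destruct Hs as [F [G [Hf ->]]].
      apply tail_spec in Ht. destruct Ht as [G' [HG' Ht]].
      destruct (patch_feas d (wt m alpha u) xdk Fk Gk F G a G' p) as [Hf2 [Hpa _]]; auto.
      * replace (S (p - 1)) with p in Hz by lia. rewrite <- Ht. lra.
      * exists F, (patch p G a G'). split; auto. rewrite Hpa. rewrite Hz. field; auto.
  - intros [F [G [Hf <-]]]. unfold CGstep. destruct (Req_EM_T (wt m alpha u p) 0) as [E|E].
    + destruct Hf as [_ [HG _]]. apply HG. lia.
    + exists (wt m alpha u p * G p). split; [|field; auto].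
      split; [|exists (G p); split; [destruct Hf as [_ [HG _]]; apply HG; lia|reflexivity]].
      exists (rsum p (d - (p - 1)) (fun l => G l * wt m alpha u l)),
             (rsum (S p) (d - p) (fun l => G l * wt m alpha u l)).
      split; [apply Sset_spec; [lia|exists F, G; split; auto; replace (S (p - 1)) with p by lia; reflexivity]|split].
      * apply tail_spec. exists G. destruct Hf as [_ [HG _]].
        split; [intros; apply HG; lia|auto].
      * rewrite rsum_tail by auto. ring.
Qed.

Theorem lemma2 (n m d : nat)
  (f : (nat -> R) -> nat -> R) (g : nat -> (nat -> R) -> nat -> R)
  (alpha : nat -> nat -> nat)
  (x xd u : nat -> R)
  (FF : nat -> iset) (GG : nat -> nat -> iset)
  (Hdata : forall k, (k < n)%nat ->
     xd k = f x k + rsum 1 d (fun p => g p x k * mono m u (alpha p)))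
  (HFint : forall k, (k < n)%nat -> is_interval (FF k))
  (HGint : forall p k, (1 <= p <= d)%nat -> (k < n)%nat -> is_interval (GG p k))
  (HfF : forall k, (k < n)%nat -> FF k (f x k))
  (HgG : forall p k, (1 <= p <= d)%nat -> (k < n)%nat -> GG p k (g p x k)) :
  (forall k, (k < n)%nat -> forall y,
     CF d m alpha u (xd k) (FF k) (fun p => GG p k) y <->
     exists (F : nat -> R) (G : nat -> nat -> R),
       (forall k', (k' < n)%nat -> FF k' (F k')) /\
       (forall p k', (1 <= p <= d)%nat -> (k' < n)%nat -> GG p k' (G p k')) /\
       (forall k', (k' < n)%nat ->
          xd k' = F k' + rsum 1 d (fun p => G p k' * mono m u (alpha p))) /\
       F k = y)
  /\
  (forall p k, (1 <= p <= d)%nat -> (k < n)%nat -> forall y,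
     CG d m alpha u (xd k) (FF k) (fun p => GG p k) p y <->
     exists (F : nat -> R) (G : nat -> nat -> R),
       (forall k', (k' < n)%nat -> FF k' (F k')) /\
       (forall p' k', (1 <= p' <= d)%nat -> (k' < n)%nat -> GG p' k' (G p' k')) /\
       (forall k', (k' < n)%nat ->
          xd k' = F k' + rsum 1 d (fun p' => G p' k' * mono m u (alpha p'))) /\
       G p k = y).
Proof.
  assert (Lift : forall k, (k < n)%nat -> forall Fc Gc,
    feas d (wt m alpha u) (xd k) (FF k) (fun p => GG p k) Fc Gc ->
    exists (F : nat -> R) (G : nat -> nat -> R),
       (forall k', (k' < n)%nat -> FF k' (F k')) /\
       (forall p k', (1 <= p <= d)%nat -> (k' < n)%nat -> GG p k' (G p k')) /\
       (forall k', (k' < n)%nat ->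
          xd k' = F k' + rsum 1 d (fun p => G p k' * mono m u (alpha p))) /\
       F k = Fc /\ (forall p, G p k = Gc p)).
  { intros k Hk Fc Gc [HF [HG Hx]].
    exists (fun k' => if Nat.eqb k' k then Fc else f x k'),
           (fun p k' => if Nat.eqb k' k then Gc p else g p x k').
    rewrite Nat.eqb_refl. split; [|split; [|split; [|split; [reflexivity|reflexivity]]]].
    - intros k' Hk'. destruct (Nat.eqb_spec k' k); [subst; auto|auto].
    - intros p k' Hp Hk'. destruct (Nat.eqb_spec k' k); [subst; auto|auto].
    - intros k' Hk'. destruct (Nat.eqb_spec k' k); [subst; exact Hx|auto]. }
  assert (Proj : forall k, (k < n)%nat -> forall (F : nat -> R) (G : nat -> nat -> R),
       (forall k', (k' < n)%nat -> FF k' (F k')) ->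
       (forall p k', (1 <= p <= d)%nat -> (k' < n)%nat -> GG p k' (G p k')) ->
       (forall k', (k' < n)%nat ->
          xd k' = F k' + rsum 1 d (fun p => G p k' * mono m u (alpha p))) ->
       feas d (wt m alpha u) (xd k) (FF k) (fun p => GG p k) (F k) (fun p => G p k)).
  { intros k Hk F G HF HG Hx. split; [auto|split; [intros; apply HG; auto|apply Hx; auto]]. }
  split.
  - intros k Hk y. rewrite CF_spec. split.
    + intros [Gc Hf]. destruct (Lift k Hk y Gc Hf) as [F [G [H1 [H2 [H3 [H4 _]]]]]].
      exists F, G. auto.
    + intros [F [G [H1 [H2 [H3 <-]]]]]. exists (fun p => G p k). apply Proj; auto.
  - intros p k Hp Hk y.
    rewrite (CG_spec d m alpha u (xd k) (FF k) (fun p => GG p k) p y (f x k) (fun p => g p x k) Hp).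
    2: { split; [auto|split; [intros; apply HgG; auto|apply Hdata; auto]]. }
    split.
    + intros [Fc [Gc [Hf <-]]]. destruct (Lift k Hk Fc Gc Hf) as [F [G [H1 [H2 [H3 [_ H5]]]]]].
      exists F, G. auto.
    + intros [F [G [H1 [H2 [H3 <-]]]]]. exists (F k), (fun p => G p k). split; [apply Proj; auto|reflexivity].
Qed.
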